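(* Let $N\ge 1$, let $a_1,\dots,a_N>0$, $T_1,\dots,T_N\ge 0$ and $P_{\mathrm{tot}}>0$, let $c=\ln 2$, $\bar P_i=(2^{T_i}-1)/a_i$, and let $W_0$ be the principal branch of the Lambert W function. For $\lambda>0$ define $$P_i(\lambda)=\frac{2}{\lambda c^2}\,W_0\!\left(\frac{\lambda c^2}{2a_i}\,2^{T_i}\right)-\frac1{a_i},\qquad P_i^*(\lambda)=\min\{\bar P_i,\max\{0,P_i(\lambda)\}\},\qquad S(\lambda)=\sum_{i=1}^N P_i^*(\lambda).$$ Suppose $P_{\mathrm{tot}}<\sum_{i=1}^N\bar P_i$. Then there exists $\lambda^*>0$ with $S(\lambda^* )=P_{\mathrm{tot}}$, and for any such $\lambda^*$ the vector $(P_1^*(\lambda^* ),\dots,P_N^*(\lambda^* ))$ is an optimal solution of the problem of minimizing $\sum_{i=1}^N(\log_2(1+a_iP_i)-T_i)^2$ subject to $\sum_i P_i\le P_{\mathrm{tot}}$ and $P_i\ge 0$ for all $i$. Moreover, $P_i^*(\lambda)=0$ whenever $\lambda\ge 2a_iT_i/c$.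
   Context: For $z\ge 0$, $W_0(z)$ is the unique $w\ge 0$ with $we^w=z$. *)

(* Defs.v *)
From Stdlib Require Import Reals Lra ClassicalEpsilon.
Open Scope R_scope.

Fixpoint rsum (n : nat) (f : nat -> R) : R :=
  match n with
  | O => 0
  | S m => rsum m f + f m
  end.

(* Principal branch of Lambert W on z >= 0: the unique w >= 0 with w e^w = z.
   (Chosen by Hilbert epsilon; meaningful for z >= 0.) *)
Definition W0 (z : R) : R :=
  epsilon (inhabits 0) (fun w => 0 <= w /\ w * exp w = z).

Definition c : R := ln 2.

Definition log2 (x : R) : R := ln x / ln 2.

Definition Pbar (a T : R) : R := (Rpower 2 T - 1) / a.

Definition Plam (a T lam : R) : R :=
  2 / (lam * c ^ 2) * W0 (lam * c ^ 2 / (2 * a) * Rpower 2 T) - 1 / a.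

Definition Pstar (a T lam : R) : R :=
  Rmin (Pbar a T) (Rmax 0 (Plam a T lam)).

Definition Ssum (N : nat) (a T : nat -> R) (lam : R) : R :=
  rsum N (fun i => Pstar (a i) (T i) lam).

Definition objective (N : nat) (a T P : nat -> R) : R :=
  rsum N (fun i => (log2 (1 + a i * P i) - T i) ^ 2).

Definition feasible (N : nat) (Ptot : R) (P : nat -> R) : Prop :=
  rsum N P <= Ptot /\ (forall i, (i < N)%nat -> 0 <= P i).

Definition optimal (N : nat) (a T : nat -> R) (Ptot : R) (P : nat -> R) : Prop :=
  feasible N Ptot P /\
  (forall Q : nat -> R, feasible N Ptot Q -> objective N a T P <= objective N a T Q).

(* Main.v *)
Require Import Defs.
From Stdlib Require Import Reals Lra Psatz Ranalysis5 ClassicalEpsilon.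
Open Scope R_scope.

Lemma c_pos : 0 < c.
Proof. unfold c. rewrite <- ln_1. apply ln_increasing; lra. Qed.

Lemma h_incr x y : 0 <= x -> x < y -> x * exp x < y * exp y.
Proof.
  intros hx hxy. assert (exp x < exp y) by (apply exp_increasing; lra).
  assert (0 < exp x) by apply exp_pos. nra.
Qed.

Lemma W0_spec z : 0 <= z -> 0 <= W0 z /\ W0 z * exp (W0 z) = z.
Proof.
  intro hz. unfold W0. apply epsilon_spec.
  destruct (IVT_cor (fun w => w * exp w - z) 0 z) as [w [hw1 hw2]].
  - intros x. apply continuity_pt_minus.
    + apply continuity_pt_mult. apply derivable_continuous_pt, derivable_pt_id.
      apply derivable_continuous_pt, derivable_pt_exp.
    + apply continuity_pt_const. intros u v; reflexivity.
  - lra.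
  - rewrite exp_0. assert (1 <= exp z) by (pose proof (exp_ineq1_le z); lra). nra.
  - exists w. split; lra.
Qed.

Lemma W0_pos z : 0 < z -> 0 < W0 z.
Proof.
  intros hz. destruct (W0_spec z) as [h1 h2]; try lra.
  destruct h1 as [h|h]; auto. rewrite <- h in h2. lra.
Qed.

Lemma W0_cont z : 0 < z -> continuity_pt W0 z.
Proof.
  intros hz.
  apply (continuity_pt_recip_interv (fun w => w * exp w) W0 0 (z+1)); try lra.
  - intros x y hx hxy _. apply h_incr; lra.
  - intros x hx _. unfold comp, id. apply W0_spec. rewrite Rmult_0_l in hx. lra.
  - intros x hx hx2. rewrite Rmult_0_l in hx. destruct (W0_spec x hx) as [h1 h2].
    split; auto. destruct (Rle_dec (W0 x) (z+1)) as [h|h]; auto.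
    assert ((z+1) * exp (z+1) < W0 x * exp (W0 x)) by (apply h_incr; lra). lra.
  - intros. apply continuity_pt_mult. apply derivable_continuous_pt, derivable_pt_id.
      apply derivable_continuous_pt, derivable_pt_exp.
  - rewrite Rmult_0_l. split; auto.
    assert (1 <= exp (z+1)) by (pose proof (exp_ineq1_le (z+1)); lra). nra.
Qed.

Lemma key a T lam : 0 < a -> 0 < lam ->
  exists x u, 0 < x /\ 1 + a * Plam a T lam = x /\ exp (c*u) = x /\ u < T /\
     2*(T-u)*a = lam*c*x.
Proof.
  intros ha hl. pose proof c_pos as hc.
  set (k := lam*c^2/(2*a)).
  assert (hk : 0 < k) by (unfold k; apply Rdiv_lt_0_compat; [apply Rmult_lt_0_compat; [lra| apply pow_lt; lra]|lra]).
  set (E := Rpower 2 T).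
  assert (hE : E = exp (T*c)) by reflexivity.
  set (z := k * E).
  assert (hz : 0 < z) by (unfold z; rewrite hE; pose proof (exp_pos (T*c)); nra).
  pose proof (W0_pos z hz) as hw. destruct (W0_spec z) as [_ hwe]; [lra|].
  set (w := W0 z) in *.
  exists (w / k), (ln (w/k) / c).
  assert (hx : 0 < w/k) by (apply Rdiv_lt_0_compat; lra).
  assert (hlx : ln (w/k) = T*c - w).
  { unfold Rdiv; rewrite ln_mult, ln_Rinv by (try apply Rinv_0_lt_compat; lra).
    assert (ln w + w = ln k + T*c).
    { rewrite <- (ln_exp w) at 2. rewrite <- ln_mult by (auto; apply exp_pos).
      rewrite hwe. unfold z. rewrite ln_mult by (auto; rewrite hE; apply exp_pos).
      rewrite hE, ln_exp. lra. }
    lra. }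
  split; [auto|]. split.
  { unfold Plam. fold k. fold E. fold z. fold w. unfold k. field. repeat split; try lra; try (apply pow_nonzero; lra). }
  split. { replace (c * (ln (w/k)/c)) with (ln (w/k)) by (field; lra). apply exp_ln; auto. }
  rewrite hlx. split.
  { apply Rmult_lt_reg_r with c; auto. unfold Rdiv. rewrite Rmult_assoc, Rinv_l by lra. lra. }
  unfold k. field. repeat split; try lra; try (apply pow_nonzero; lra).
Qed.

Lemma Pbar_eq a T : Pbar a T = (exp (T*c) - 1)/a.
Proof. reflexivity. Qed.

Lemma Pbar_nonneg a T : 0 < a -> 0 <= T -> 0 <= Pbar a T.
Proof.
  intros ha hT. rewrite Pbar_eq. pose proof c_pos.
  pose proof (exp_ineq1_le (T*c)). unfold Rdiv; apply Rmult_le_pos; [nra| left; apply Rinv_0_lt_compat; lra].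
Qed.

Lemma Pstar_eq a T lam : 0 < a -> 0 <= T -> 0 < lam ->
  Pstar a T lam = Rmax 0 (Plam a T lam).
Proof.
  intros ha hT hl. destruct (key a T lam ha hl) as [x [u [hx [hP [he [hu _]]]]]].
  pose proof c_pos. assert (x < exp (T*c)).
  { rewrite <- he. apply exp_increasing. nra. }
  assert (Plam a T lam < Pbar a T).
  { rewrite Pbar_eq. apply Rmult_lt_reg_l with a; auto. unfold Rdiv.
    rewrite <- Rmult_assoc, (Rmult_comm a (_ - _)), Rmult_assoc, Rinv_r by lra. lra. }
  pose proof (Pbar_nonneg a T ha hT).
  unfold Pstar, Rmin, Rmax. repeat destruct Rle_dec; lra.
Qed.

Lemma log2_1 : log2 1 = 0.
Proof. unfold log2. rewrite ln_1. unfold Rdiv. ring. Qed.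

Lemma coord a T lam q : 0 < a -> 0 <= T -> 0 < lam -> 0 <= q ->
  (log2 (1 + a * Pstar a T lam) - T)^2 + lam * Pstar a T lam <=
  (log2 (1 + a * q) - T)^2 + lam * q.
Proof.
  intros ha hT hl hq. pose proof c_pos as hc.
  rewrite Pstar_eq by auto.
  destruct (key a T lam ha hl) as [x [u [hx [hP [he [hu hrel]]]]]].
  assert (h1q : 1 <= 1 + a*q) by nra.
  set (y := ln (1 + a*q)).
  assert (hy : exp y = 1 + a*q) by (apply exp_ln; lra).
  assert (hy0 : 0 <= y) by (unfold y; rewrite <- ln_1; destruct h1q as [h|h];
     [left; apply ln_increasing; lra | rewrite <- h; lra]).
  assert (hlog : log2 (1 + a*q) = y / c) by reflexivity.
  rewrite hlog. set (v := y / c). assert (hv : y = c * v) by (unfold v; field; lra).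
  assert (hlx : ln x = c * u) by (rewrite <- he; apply ln_exp).
  assert (haq : a * q = exp y - 1) by lra.
  unfold Rmax. destruct Rle_dec as [h0|h0].
  -
    assert (hlogx : log2 (1 + a * Plam a T lam) = u) by (unfold log2; rewrite hP; fold c; rewrite hlx; field; lra).
    rewrite hlogx.
    assert (H1 : x * (1 + c*v - c*u) <= exp y).
    { replace (exp y) with (exp (c*u) * exp (c*v - c*u)) by (rewrite <- exp_plus; f_equal; lra).
      rewrite he. pose proof (exp_ineq1_le (c*v - c*u)). nra. }
    assert (H2 : lam * (x * c * (v - u)) <= lam * (exp y - x)) by nra.
    assert (H3 : a * ((u - T)^2 + lam * Plam a T lam) <= a * ((v - T)^2 + lam * q)).
    { assert (a * Plam a T lam = x - 1) by lra.
      assert (lam * (x * c * (v-u)) = 2*(T-u)*a*(v-u)) by (replace (lam * (x*c*(v-u))) with ((lam*c*x)*(v-u)) by ring; rewrite <- hrel; ring).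
      assert (0 <= a * (v-u)^2) by (apply Rmult_le_pos; [lra| apply pow2_ge_0]).
      replace (a * ((u - T)^2 + lam * Plam a T lam)) with (a*(u-T)^2 + lam * (a * Plam a T lam)) by ring.
      replace (a * ((v - T)^2 + lam * q)) with (a*(v-T)^2 + lam * (a * q)) by ring.
      rewrite haq. match goal with H : a * Plam a T lam = _ |- _ => rewrite H end.
      nra. }
    apply Rmult_le_reg_l with a; auto.
  -
    rewrite Rmult_0_r, Rplus_0_r, log2_1, Rmult_0_r, Rplus_0_r.
    assert (x < 1) by nra.
    assert (c*u < 0) by (destruct (Rlt_dec (c*u) 0) as [h|h]; auto;
       assert (exp 0 <= exp (c*u)) by (destruct (Rle_lt_or_eq_dec 0 (c*u)) as [h'|h']; try lra;
          [left; apply exp_increasing; auto | rewrite h'; lra]); rewrite exp_0 in *; lra).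
    assert (u < 0) by nra.
    assert (hlc : 0 < lam * c) by nra.
    assert (lam * c * x <= lam * c) by (rewrite <- (Rmult_1_r (lam*c)) at 2; apply Rmult_le_compat_l; lra).
    assert (0 <= - u * a) by nra.
    assert (H4 : 2 * T * a <= lam * c) by nra.
    assert (H5 : 1 + y <= exp y) by apply exp_ineq1_le.
    assert (H6 : a * (lam * q) >= a * (2 * T * v)).
    { replace (a * (lam * q)) with (lam * (a*q)) by ring. rewrite haq.
      assert (lam * y <= lam * (exp y - 1)) by (apply Rmult_le_compat_l; lra).
      rewrite hv in *. assert (0 <= v) by nra. nra. }
    assert (lam * q >= 2 * T * v) by (apply Rle_ge; apply Rmult_le_reg_l with a; lra).
    assert (0 <= v) by nra. nra.
Qed.

Lemma part3 a T lam : 0 < a -> 0 <= T -> 0 < lam -> 2 * a * T / c <= lam ->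
  Pstar a T lam = 0.
Proof.
  intros ha hT hl hle. pose proof c_pos as hc.
  rewrite Pstar_eq by auto.
  destruct (key a T lam ha hl) as [x [u [hx [hP [he [hu hrel]]]]]].
  assert (H : 2 * a * T <= lam * c).
  { apply Rmult_le_compat_r with (r := c) in hle; [|lra].
    unfold Rdiv in hle. rewrite Rmult_assoc, Rinv_l in hle by lra. lra. }
  unfold Rmax. destruct Rle_dec as [h0|h0]; [|reflexivity].
  destruct h0 as [h0|h0]; [|auto]. exfalso. assert (1 < x) by nra.
  assert (0 < c*u).
  { destruct (Rlt_dec 0 (c*u)) as [h|h]; auto.
    assert (exp (c*u) <= exp 0) by (destruct (Rle_lt_or_eq_dec (c*u) 0) as [h'|h']; try lra;
          [left; apply exp_increasing; auto | rewrite h'; lra]). rewrite exp_0 in *; lra. }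
  assert (0 < u) by nra.
  assert (hlc : 0 < lam * c) by nra.
  assert (lam * c < lam * c * x) by (rewrite <- (Rmult_1_r (lam*c)) at 1; apply Rmult_lt_compat_l; lra).
  assert (0 < u * a) by nra. nra.
Qed.

Lemma lower a T lam : 0 < a -> 0 <= T -> 0 < lam ->
  Pbar a T - lam * (c^2 * exp (T*c)^2 / (2*a^2)) <= Pstar a T lam.
Proof.
  intros ha hT hl. pose proof c_pos as hc.
  rewrite Pstar_eq by auto.
  destruct (key a T lam ha hl) as [x [u [hx [hP [he [hu hrel]]]]]].
  set (E := exp (T*c)). set (d := c*(T-u)).
  assert (hd : 0 <= d) by (unfold d; nra).
  assert (hE : E = x * exp d) by (unfold E, d; rewrite <- he, <- exp_plus; f_equal; ring).
  assert (hm : exp d * exp (-d) = 1) by (rewrite <- exp_plus, Rplus_opp_r; apply exp_0).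
  pose proof (exp_ineq1_le (-d)) as h1.
  pose proof (exp_pos d). pose proof (exp_pos (-d)).
  assert (hxE : x = E * exp (-d)) by (rewrite hE; nra).
  assert (hxE2 : E * (1 - d) <= x) by (rewrite hxE; apply Rmult_le_compat_l; unfold E; [left; apply exp_pos|lra]).
  assert (hed : exp (-d) <= 1) by (rewrite <- exp_0; destruct hd as [hd|hd];
     [left; apply exp_increasing; lra| rewrite <- hd, Ropp_0; lra]).
  assert (hE0 : 0 < E) by apply exp_pos.
  assert (x <= E) by nra.
  assert (hd2 : 2 * a * d = lam * c^2 * x) by (unfold d; nra).
  assert (hlc : 0 < lam * c^2) by (apply Rmult_lt_0_compat; [lra| apply pow_lt; lra]).
  assert (hd3 : 2 * a * d <= lam * c^2 * E) by (rewrite hd2; apply Rmult_le_compat_l; lra).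
  assert (hd4 : 2 * a * (E * d) <= lam * c^2 * E^2) by (replace (2*a*(E*d)) with (E * (2*a*d)) by ring;
     replace (lam * c^2 * E^2) with (E * (lam*c^2*E)) by ring; apply Rmult_le_compat_l; lra).
  assert (haP : a * Plam a T lam = x - 1) by lra.
  assert (hkey : 2 * a^2 * (Plam a T lam) >= 2 * a * (E - 1) - lam * c^2 * E^2).
  { replace (2 * a^2 * (Plam a T lam)) with (2 * a * (a * Plam a T lam)) by ring.
    rewrite haP. assert (2*a*(E*(1-d)) <= 2*a*x) by (apply Rmult_le_compat_l; lra). nra. }
  assert (Plam a T lam >= Pbar a T - lam * (c^2 * E^2 / (2*a^2))).
  { rewrite Pbar_eq. fold E.
    apply Rle_ge; apply Rmult_le_reg_l with (2*a^2); [nra|].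
    replace (2 * a ^ 2 * ((E - 1) / a - lam * (c ^ 2 * E ^ 2 / (2 * a ^ 2)))) with
      (2 * a * (E - 1) - lam * c ^ 2 * E ^ 2) by (field; lra). lra. }
  unfold Rmax. destruct Rle_dec; lra.
Qed.

Lemma rsum_le N f g : (forall i, (i < N)%nat -> f i <= g i) -> rsum N f <= rsum N g.
Proof.
  induction N; simpl; intros H; [lra|].
  assert (f N <= g N) by (apply H; auto).
  assert (rsum N f <= rsum N g) by (apply IHN; intros; apply H; auto). lra.
Qed.

Lemma rsum_plus N f g : rsum N (fun i => f i + g i) = rsum N f + rsum N g.
Proof. induction N; simpl; [lra|]. rewrite IHN. ring. Qed.

Lemma rsum_scal N k f : rsum N (fun i => k * f i) = k * rsum N f.
Proof. induction N; simpl; [lra|]. rewrite IHN. ring. Qed.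

Lemma rsum_nonneg N f : (forall i, (i < N)%nat -> 0 <= f i) -> 0 <= rsum N f.
Proof.
  induction N; simpl; intros H; [lra|].
  assert (0 <= f N) by (apply H; auto).
  assert (0 <= rsum N f) by (apply IHN; intros; apply H; auto). lra.
Qed.

Lemma rsum_term N f j : (forall i, (i < N)%nat -> 0 <= f i) -> (j < N)%nat -> f j <= rsum N f.
Proof.
  induction N; simpl; intros H hj; [lia|].
  destruct (Nat.eq_dec j N) as [->|hne].
  - assert (0 <= rsum N f) by (apply rsum_nonneg; intros; apply H; auto). lra.
  - assert (f j <= rsum N f) by (apply IHN; [intros; apply H; auto| lia]).
    assert (0 <= f N) by (apply H; auto). lra.
Qed.

Lemma rsum_zero N f : (forall i, (i < N)%nat -> f i = 0) -> rsum N f = 0.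
Proof.
  induction N; simpl; intros H; [lra|]. rewrite IHN, H; auto. lra.
Qed.

Lemma cp_plus f g x : continuity_pt f x -> continuity_pt g x -> continuity_pt (fun l => f l + g l) x.
Proof. exact (continuity_pt_plus f g x). Qed.
Lemma cp_minus f g x : continuity_pt f x -> continuity_pt g x -> continuity_pt (fun l => f l - g l) x.
Proof. exact (continuity_pt_minus f g x). Qed.
Lemma cp_mult f g x : continuity_pt f x -> continuity_pt g x -> continuity_pt (fun l => f l * g l) x.
Proof. exact (continuity_pt_mult f g x). Qed.
Lemma cp_div f g x : continuity_pt f x -> continuity_pt g x -> g x <> 0 -> continuity_pt (fun l => f l / g l) x.
Proof. exact (continuity_pt_div f g x). Qed.
Lemma cp_const k x : continuity_pt (fun _ => k) x.
Proof. apply continuity_pt_const. intros u v; reflexivity. Qed.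
Lemma cp_id x : continuity_pt (fun l => l) x.
Proof. apply derivable_continuous_pt, derivable_pt_id. Qed.
Lemma cp_abs f x : continuity_pt f x -> continuity_pt (fun l => Rabs (f l)) x.
Proof. intros H. exact (continuity_pt_comp f Rabs x H (Rcontinuity_abs _)). Qed.
Lemma cp_W0 f x : continuity_pt f x -> 0 < f x -> continuity_pt (fun l => W0 (f l)) x.
Proof. intros H h. exact (continuity_pt_comp f W0 x H (W0_cont _ h)). Qed.

Lemma rsum_cont N F x : (forall i, (i < N)%nat -> continuity_pt (fun l => F i l) x) ->
  continuity_pt (fun l => rsum N (fun i => F i l)) x.
Proof.
  induction N; simpl; intros H.
  - apply cp_const.
  - apply cp_plus; [apply IHN; intros; apply H; auto| apply H; auto].
Qed.

Lemma Rmax0_eq y : Rmax 0 y = (y + Rabs y)/2.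
Proof. unfold Rmax, Rabs. repeat destruct Rle_dec; repeat destruct Rcase_abs; lra. Qed.
Lemma Rmin_eq p y : Rmin p y = (p + y - Rabs (p - y))/2.
Proof. unfold Rmin, Rabs. repeat destruct Rle_dec; repeat destruct Rcase_abs; lra. Qed.

Lemma Plam_cont a T x : 0 < a -> 0 < x -> continuity_pt (fun l => Plam a T l) x.
Proof.
  intros ha hx. pose proof c_pos. unfold Plam.
  assert (0 < c^2) by (apply pow_lt; lra).
  apply cp_minus; [|apply cp_const].
  apply cp_mult.
  - apply cp_div; [apply cp_const| apply cp_mult; [apply cp_id| apply cp_const]|nra].
  - apply cp_W0.
    + apply cp_mult; [|apply cp_const]. apply cp_div; [apply cp_mult; [apply cp_id| apply cp_const]|apply cp_const|lra].
    + apply Rmult_lt_0_compat; [apply Rdiv_lt_0_compat; nra| apply exp_pos].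
Qed.

Lemma Pstar_cont a T x : 0 < a -> 0 < x -> continuity_pt (fun l => Pstar a T l) x.
Proof.
  intros ha hx.
  apply continuity_pt_locally_ext with
    (f := fun l => (Pbar a T + (Plam a T l + Rabs (Plam a T l))/2 - Rabs (Pbar a T - (Plam a T l + Rabs (Plam a T l))/2))/2) (a := 1); [lra| |].
  - intros y _. unfold Pstar. rewrite Rmin_eq, Rmax0_eq. reflexivity.
  - pose proof (Plam_cont a T x ha hx).
    assert (continuity_pt (fun l => (Plam a T l + Rabs (Plam a T l))/2) x).
    { apply cp_div; [apply cp_plus; [auto| apply cp_abs; auto]| apply cp_const| lra]. }
    apply cp_div; [|apply cp_const|lra].
    apply cp_minus; [apply cp_plus; [apply cp_const| auto]|].
    apply cp_abs. apply cp_minus; [apply cp_const|auto].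
Qed.

Theorem mainTheorem8 (N : nat) (a T : nat -> R) (Ptot : R)
  (hN : (1 <= N)%nat)
  (ha : forall i, (i < N)%nat -> 0 < a i)
  (hT : forall i, (i < N)%nat -> 0 <= T i)
  (hP : 0 < Ptot)
  (hlt : Ptot < rsum N (fun i => Pbar (a i) (T i))) :
  (exists lam, 0 < lam /\ Ssum N a T lam = Ptot) /\
  (forall lam, 0 < lam -> Ssum N a T lam = Ptot ->
     optimal N a T Ptot (fun i => Pstar (a i) (T i) lam)) /\
  (forall lam i, 0 < lam -> (i < N)%nat -> 2 * a i * T i / c <= lam ->
     Pstar (a i) (T i) lam = 0).
Proof.
  pose proof c_pos as hc.
  split; [|split].
  - set (delta := rsum N (fun i => Pbar (a i) (T i)) - Ptot).
    set (K := fun i => c^2 * exp (T i * c)^2 / (2 * a i ^2)).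
    set (SK := rsum N K).
    assert (hSK : 0 <= SK).
    { apply rsum_nonneg. intros i hi. unfold K. pose proof (ha i hi).
      apply Rmult_le_pos; [apply Rmult_le_pos; apply pow2_ge_0|].
      left; apply Rinv_0_lt_compat. nra. }
    set (lam1 := delta / (2 * (SK + 1))).
    assert (hl1 : 0 < lam1) by (unfold lam1, delta; apply Rdiv_lt_0_compat; lra).
    assert (hl1b : lam1 * SK < delta).
    { unfold lam1. apply Rmult_lt_reg_l with (2*(SK+1)); [lra|].
      replace (2 * (SK + 1) * (delta / (2 * (SK + 1)) * SK)) with (delta * SK) by (field; lra).
      unfold delta. nra. }
    set (B := rsum N (fun i => 2 * a i * T i / c)).
    assert (hB : forall i, (i < N)%nat -> 0 <= 2 * a i * T i / c).
    { intros i hi. pose proof (ha i hi). pose proof (hT i hi).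
      unfold Rdiv. apply Rmult_le_pos; [nra| left; apply Rinv_0_lt_compat; lra]. }
    assert (hB0 : 0 <= B) by (apply rsum_nonneg; auto).
    set (lam2 := lam1 + 1 + B).
    assert (hS1 : Ptot < Ssum N a T lam1).
    { apply Rlt_le_trans with (rsum N (fun i => Pbar (a i) (T i) + (- lam1) * K i)).
      - rewrite rsum_plus, rsum_scal. fold SK. unfold delta in hl1b. lra.
      - apply rsum_le. intros i hi. pose proof (lower (a i) (T i) lam1 (ha i hi) (hT i hi) hl1).
        unfold K. lra. }
    assert (hS2 : Ssum N a T lam2 = 0).
    { apply rsum_zero. intros i hi.
      pose proof (rsum_term N (fun i => 2 * a i * T i / c) i hB hi) as HH. fold B in HH.
      apply part3; auto; unfold lam2; lra. }
    destruct (IVT_interv (fun l => Ptot - Ssum N a T l) lam1 lam2) as [lam [hlam hlam2]].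
    + intros l hl. apply cp_minus; [apply cp_const|].
      unfold Ssum. apply rsum_cont. intros i hi. apply Pstar_cont; auto. lra.
    + unfold lam2. lra.
    + lra.
    + rewrite hS2. lra.
    + exists lam. split; lra.
  - intros lam hl hS. unfold optimal, feasible.
    assert (hnn : forall i, (i < N)%nat -> 0 <= Pstar (a i) (T i) lam).
    { intros i hi. rewrite Pstar_eq; auto. apply Rmax_l. }
    split; [split; [unfold Ssum in hS; lra| auto]|].
    intros Q [hQ1 hQ2].
    assert (H := rsum_le N
      (fun i => (log2 (1 + a i * Pstar (a i) (T i) lam) - T i)^2 + lam * Pstar (a i) (T i) lam)
      (fun i => (log2 (1 + a i * Q i) - T i)^2 + lam * Q i)
      (fun i hi => coord (a i) (T i) lam (Q i) (ha i hi) (hT i hi) hl (hQ2 i hi))).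
    rewrite !rsum_plus, !rsum_scal in H. unfold objective. unfold Ssum in hS. rewrite hS in H.
    assert (lam * rsum N Q <= lam * Ptot) by (apply Rmult_le_compat_l; lra).
    lra.
  - intros lam i hl hi hle. apply part3; auto.
Qed.
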